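(* Fix $\varepsilon>0$ and $\alpha>0$, and let $(\sigma_K)$ be a sequence with $K^{-1/2+\alpha}\ll\sigma_K\ll1$. Let $C_1>0$, $C_2\ge0$ and let $(Z_n)$ be a Markov chain on $\mathbb N_0$ with transition probabilities $p(0,1)=1$ and, for $i\ge1$, $p(i,i+1)=\tfrac12-C_1iK^{-1}+C_2\varepsilon\sigma_K$, $p(i,i-1)=\tfrac12+C_1iK^{-1}-C_2\varepsilon\sigma_K$. Let $\tau_i$ be the first hitting time of level $i$ by $Z$ and $\mathbb P_a$ the law of $Z$ started at $Z_0=a$. Then for all $M\ge 8C_2/C_1$ and all $a\le\tfrac13M\varepsilon\sigma_KK$, $$\lim_{K\to\infty}e^{K^{2\alpha}}\,\mathbb P_a\big[\tau_{\lceil M\varepsilon\sigma_KK\rceil}<\tau_0\big]=0.$$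
   Context: $f(K)\ll g(K)$ means $f(K)/g(K)\to0$ as $K\to\infty$. *)

(* Defs.v *)
From Stdlib Require Import Reals ZArith Arith.
From Coquelicot Require Import Coquelicot.
Open Scope R_scope.

Definition Rceil_Z (x : R) : Z := (- Int_part (- x))%Z.

Definition up_prob (C1 C2 eps : R) (sigma : nat -> R) (K i : nat) : R :=
  match i with
  | O => 1
  | S _ => / 2 - C1 * INR i / INR K + C2 * eps * sigma K
  end.

(* hit_within p N n i = P_i[ tau_N <= n /\ tau_N < tau_0 ] for the nearest-neighbour
   chain on N_0 with up-probability p i and down-probability 1 - p i
   (first-step analysis on the path space). *)
Fixpoint hit_within (p : nat -> R) (N n i : nat) : R :=
  match n with
  | O => if Nat.eqb i 0 then 0 else if Nat.eqb i N then 1 else 0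
  | S m =>
      if Nat.eqb i 0 then 0 else if Nat.eqb i N then 1 else
      p i * hit_within p N m (S i) + (1 - p i) * hit_within p N m (pred i)
  end.

(* P_a[ tau_N < tau_0 ] = lim_n P_a[ tau_N <= n, tau_N < tau_0 ]
   (continuity from below of the probability measure). *)
Definition hit_before_zero (p : nat -> R) (N a : nat) : R :=
  real (Lim_seq (fun n => hit_within p N n a)).

(* Main.v *)
Require Import Defs.
From Stdlib Require Import Reals ZArith Arith Lra Lia.
From Coquelicot Require Import Coquelicot.
Open Scope R_scope.

Definition fq (p : nat -> R) i := (1 - p i) / p i.
Fixpoint rr p n := match n with O => 1 | S m => rr p m * fq p (S m) end.
Fixpoint SS p n := match n with O => 0 | S m => SS p m + rr p m end.

Lemma rr_nonneg p n : (forall t, (1 <= t <= n)%nat -> 0 < fq p t) -> 0 < rr p n.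
Proof.
  induction n; intros H; simpl. lra.
  apply Rmult_lt_0_compat. apply IHn. intros; apply H; lia. apply H; lia.
Qed.

Lemma SS_nonneg p n : (forall t, (1 <= t < n)%nat -> 0 < fq p t) -> 0 <= SS p n.
Proof.
  induction n; intros H; simpl. lra.
  assert (0 < rr p n) by (apply rr_nonneg; intros; apply H; lia).
  assert (0 <= SS p n) by (apply IHn; intros; apply H; lia). lra.
Qed.

Lemma hit_bound p N : (1 <= N)%nat ->
  (forall i, (1 <= i < N)%nat -> 0 < p i < 1) ->
  forall n i, (i <= N)%nat -> 0 <= hit_within p N n i <= SS p i / SS p N.
Proof.
  intros HN Hp.
  assert (Hf : forall t, (1 <= t <= N - 1)%nat -> 0 < fq p t).
  { intros t Ht. unfold fq. assert (Ht2 : (1 <= t < N)%nat) by lia. destruct (Hp t Ht2). apply Rdiv_lt_0_compat; lra. }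
  assert (HSN : 0 < SS p N).
  { destruct N as [|N']. lia. simpl. replace N' with (S N' - 1)%nat by lia.
    pose proof (rr_nonneg p (S N' - 1) Hf). pose proof (SS_nonneg p (S N' - 1) ltac:(intros; apply Hf; lia)). lra. }
  assert (HSi : forall i, (i <= N)%nat -> 0 <= SS p i).
  { intros i Hi. apply SS_nonneg. intros; apply Hf; lia. }
  induction n; intros i Hi; simpl.
  - destruct (Nat.eqb_spec i 0). split; [lra|]. subst; simpl; unfold Rdiv; lra.
    destruct (Nat.eqb_spec i N). subst. split. lra. right; field; lra.
    split. lra. apply Rdiv_le_0_compat; auto.
  - destruct (Nat.eqb_spec i 0). split; [lra|]. subst; simpl; unfold Rdiv; lra.
    destruct (Nat.eqb_spec i N). subst. split. lra. right; field; lra.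
    destruct i as [|j]. lia.
    destruct (Hp (S j) ltac:(lia)) as [hp0 hp1].
    destruct (IHn (S (S j)) ltac:(lia)) as [a1 a2].
    destruct (IHn (pred (S j)) ltac:(lia)) as [b1 b2].
    split. nra.
    assert (Heq : p (S j) * (SS p (S (S j)) / SS p N) + (1 - p (S j)) * (SS p (pred (S j)) / SS p N)
                 = SS p (S j) / SS p N).
    { simpl. unfold fq. field. lra. }
    rewrite <- Heq. apply Rplus_le_compat; apply Rmult_le_compat_l; lra.
Qed.

Lemma lim_bound (u : nat -> R) B : (forall n, 0 <= u n <= B) ->
  0 <= real (Lim_seq u) <= B.
Proof.
  intros H.
  assert (H1 : Rbar_le (Lim_seq (fun _ => 0)) (Lim_seq u)).
  { apply Lim_seq_le_loc. exists O. intros; apply H. }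
  assert (H2 : Rbar_le (Lim_seq u) (Lim_seq (fun _ => B))).
  { apply Lim_seq_le_loc. exists O. intros; apply H. }
  rewrite Lim_seq_const in H1, H2.
  destruct (Lim_seq u); simpl in *; try contradiction; lra.
Qed.

Lemma fq_shift p N : (forall i, (1 <= i)%nat -> (i + 1 <= N)%nat -> fq p i <= fq p (S i)) ->
  forall j t, (1 <= t)%nat -> (j + t <= N)%nat -> fq p t <= fq p (j + t).
Proof.
  intros H. induction j; intros t Ht Hjt. simpl; lra.
  eapply Rle_trans. apply IHj; lia. replace (S j + t)%nat with (S (j + t)) by lia.
  apply H; lia.
Qed.

Lemma rr_super p N : (forall i, (1 <= i)%nat -> (i + 1 <= N)%nat -> fq p i <= fq p (S i)) ->
  (forall t, (1 <= t <= N)%nat -> 0 < fq p t) ->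
  forall j m, (j + m <= N)%nat -> rr p j * rr p m <= rr p (j + m).
Proof.
  intros Hm Hpos j m. induction m; intros H.
  - simpl. rewrite Nat.add_0_r. lra.
  - replace (j + S m)%nat with (S (j + m)) by lia. simpl.
    pose proof (IHm ltac:(lia)).
    assert (0 < rr p j) by (apply rr_nonneg; intros; apply Hpos; lia).
    assert (0 < rr p m) by (apply rr_nonneg; intros; apply Hpos; lia).
    assert (0 < fq p (S m)) by (apply Hpos; lia).
    pose proof (fq_shift p N Hm j (S m) ltac:(lia) ltac:(lia)).
    replace (j + S m)%nat with (S (j + m)) in H4 by lia.
    rewrite <- Rmult_assoc. apply Rmult_le_compat; try nra.
Qed.

Lemma SS_super p N : (forall i, (1 <= i)%nat -> (i + 1 <= N)%nat -> fq p i <= fq p (S i)) ->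
  (forall t, (1 <= t <= N)%nat -> 0 < fq p t) ->
  forall m a, (m + a <= N)%nat -> rr p m * SS p a <= SS p (m + a) - SS p m.
Proof.
  intros Hm Hpos m a. induction a; intros H.
  - simpl. rewrite Nat.add_0_r. lra.
  - replace (m + S a)%nat with (S (m + a)) by lia. simpl.
    pose proof (IHa ltac:(lia)). pose proof (rr_super p N Hm Hpos m a ltac:(lia)). nra.
Qed.

Lemma exp_le_mono x y : x <= y -> exp x <= exp y.
Proof. intros [H|H]. left; apply exp_increasing; auto. subst; lra. Qed.

Lemma factor_bound d : -/4 <= d <= /4 -> exp (4*d - 8*d^2) <= (/2 + d) / (/2 - d).
Proof.
  intros Hd. set (u := 2*d).
  assert (E1 : exp (u/(1+u)) <= 1 + u).
  { pose proof (exp_ineq1_le (- (u/(1+u)))).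
    assert (1 + - (u / (1 + u)) = / (1+u)) by (field; unfold u; lra).
    rewrite H0 in H. rewrite exp_Ropp in H.
    assert (0 < exp (u/(1+u))) by apply exp_pos.
    assert (0 < 1 + u) by (unfold u; lra).
    apply Rinv_le_contravar in H. rewrite !Rinv_inv in H. lra.
    apply Rinv_0_lt_compat; lra. }
  assert (E2 : exp u <= / (1 - u)).
  { pose proof (exp_ineq1_le (- u)). rewrite exp_Ropp in H.
    assert (0 < exp u) by apply exp_pos.
    apply Rinv_le_contravar in H. rewrite Rinv_inv in H. exact H. unfold u; lra. }
  assert (E3 : 4*d - 8*d^2 <= u/(1+u) + u).
  { unfold u. apply Rle_trans with (2*(2*d) - (2*d)^2 / (1 + 2*d) ).
    - assert (0 < 1 + 2*d) by lra.
      assert ((2*d)^2/(1+2*d) <= 8*d^2).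
      { apply Rmult_le_reg_r with (1 + 2*d); auto. unfold Rdiv. rewrite Rmult_assoc, Rinv_l by lra. assert (0 <= d^2 * (1 + 4*d)) by (apply Rmult_le_pos; nra). nra. }
      lra.
    - right. field. lra. }
  eapply Rle_trans. apply exp_le_mono; exact E3. rewrite exp_plus.
  replace ((/2 + d) / (/2 - d)) with ((1+u) * / (1-u)) by (unfold u; field; lra).
  apply Rmult_le_compat; try (left; apply exp_pos); auto.
Qed.

Lemma core (C1 C2 eps M k s : R) (a N : nat) (p : nat -> R) :
  0 < C1 -> 0 <= C2 -> 0 < eps -> 0 < M -> 0 < k -> 0 < s -> 8*C2 <= C1*M ->
  M*eps*s*k <= INR N -> INR N <= M*eps*s*k + 1 -> INR a <= /3*(M*eps*s*k) ->
  C2*eps*s <= /8 -> C1*(M*eps*s*k+1)/k <= /8 ->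
  (C1*(M*eps*s*k+1)/k + C2*eps*s)^2 <= C1*M*eps*s/24 ->
  (forall i, (1 <= i)%nat -> p i = /2 - (C1*INR i/k - C2*eps*s)) ->
  0 <= hit_before_zero p N a <= exp (-(C1*M^2*eps^2/3) * (s^2*k)).
Proof.
  intros hC1 hC2 heps hM hk hs hM8 hN1 hN2 ha he1 he2 he3 hp.
  set (x := M*eps*s*k) in *.
  set (eta := C2*eps*s) in *.
  set (B := C1*(x+1)/k + eta) in *.
  assert (hx : 0 < x) by (unfold x; repeat apply Rmult_lt_0_compat; auto).
  assert (heta : 0 <= eta) by (unfold eta; repeat apply Rmult_le_pos; lra).
  assert (HN : (1 <= N)%nat).
  { destruct N. simpl in hN1; lra. lia. }
  assert (Hd : forall i, (1 <= i <= N)%nat -> - eta <= C1*INR i/k - eta <= C1*(x+1)/k - eta).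
  { intros i Hi. split.
    - assert (0 <= C1 * INR i / k). { apply Rdiv_le_0_compat; [|lra]. apply Rmult_le_pos; [lra|apply pos_INR]. } lra.
    - assert (INR i <= x + 1). { apply Rle_trans with (INR N); auto. apply le_INR; lia. }
      assert (C1 * INR i / k <= C1 * (x+1) / k).
      { unfold Rdiv. apply Rmult_le_compat_r. left; apply Rinv_0_lt_compat; lra.
        apply Rmult_le_compat_l; lra. } lra. }
  assert (Hfq : forall i, (1 <= i)%nat -> fq p i = (/2 + (C1*INR i/k - eta)) / (/2 - (C1*INR i/k - eta))).
  { intros i Hi. unfold fq. rewrite hp by auto. replace (1 - (/2 - (C1*INR i/k - eta))) with (/2 + (C1*INR i/k - eta)) by lra. reflexivity. }
  assert (Hp : forall i, (1 <= i < N)%nat -> 0 < p i < 1).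
  { intros i Hi. rewrite hp by lia. pose proof (Hd i ltac:(lia)). fold eta. lra. }
  assert (Hpos : forall t, (1 <= t <= N)%nat -> 0 < fq p t).
  { intros t Ht. rewrite Hfq by lia. pose proof (Hd t Ht). apply Rdiv_lt_0_compat; lra. }
  assert (Hmono : forall i, (1 <= i)%nat -> (i + 1 <= N)%nat -> fq p i <= fq p (S i)).
  { intros i H1 H2. rewrite !Hfq by lia.
    pose proof (Hd i ltac:(lia)). pose proof (Hd (S i) ltac:(lia)).
    set (d1 := C1 * INR i / k - eta) in *. set (d2 := C1 * INR (S i) / k - eta) in *.
    assert (d1 <= d2).
    { unfold d1, d2. rewrite S_INR. assert (0 <= C1/k) by (apply Rdiv_le_0_compat; lra).
      unfold Rdiv in *. nra. }
    apply Rmult_le_reg_r with ((/2 - d1) * (/2 - d2)). apply Rmult_lt_0_compat; lra.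
    replace ((/ 2 + d1) / (/ 2 - d1) * ((/ 2 - d1) * (/ 2 - d2))) with ((/2 + d1) * (/2 - d2)) by (field; lra).
    replace ((/ 2 + d2) / (/ 2 - d2) * ((/ 2 - d1) * (/ 2 - d2))) with ((/2 + d2) * (/2 - d1)) by (field; lra).
    nra. }
  assert (Hfac : forall t, (1 <= t <= N)%nat -> exp (4*(C1*INR t/k - eta) - 8*B^2) <= fq p t).
  { intros t Ht. rewrite Hfq by lia. pose proof (Hd t Ht).
    eapply Rle_trans; [|apply factor_bound; lra].
    apply exp_le_mono.
    assert ((C1 * INR t / k - eta)^2 <= B^2).
    { unfold B. assert (0 <= C1*(x+1)/k) by lra. nra. } lra. }
  set (LB := fun m : nat => 2*C1*INR m*(INR m+1)/k - 4*INR m*eta - 8*INR m*B^2).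
  assert (Hr : forall m, (m <= N)%nat -> exp (LB m) <= rr p m).
  { induction m; intros Hm.
    - unfold LB; simpl rr. match goal with |- exp ?e <= _ => replace e with 0 by (simpl; field; lra) end.
      rewrite exp_0; lra.
    - simpl rr. replace (LB (S m)) with (LB m + (4*(C1*INR (S m)/k - eta) - 8*B^2)).
      2:{ unfold LB. rewrite S_INR. field. lra. }
      rewrite exp_plus. apply Rmult_le_compat; try (left; apply exp_pos).
      apply IHm; lia. apply Hfac; lia. }
  assert (HaN : (a <= N)%nat).
  { apply INR_le. lra. }
  set (m := (N - a)%nat).
  assert (HmR : INR m = INR N - INR a) by (unfold m; apply minus_INR; auto).
  assert (Hsup := SS_super p N Hmono Hpos m a ltac:(unfold m; lia)).
  replace (m + a)%nat with N in Hsup by (unfold m; lia).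
  assert (HSm : 0 <= SS p m).
  { apply SS_nonneg. intros; apply Hpos; unfold m in *; lia. }
  assert (Hrm : 0 < rr p m) by (apply rr_nonneg; intros; apply Hpos; unfold m in *; lia).
  assert (HSN : 0 < SS p N).
  { destruct N as [|N']. lia. simpl. pose proof (rr_nonneg p N' ltac:(intros; apply Hpos; lia)).
    pose proof (SS_nonneg p N' ltac:(intros; apply Hpos; lia)). lra. }
  assert (Hratio : SS p a / SS p N <= / rr p m).
  { apply Rmult_le_reg_r with (SS p N * rr p m). apply Rmult_lt_0_compat; lra.
    replace (SS p a / SS p N * (SS p N * rr p m)) with (rr p m * SS p a) by (field; lra).
    replace (/ rr p m * (SS p N * rr p m)) with (SS p N) by (field; lra). lra. }
  assert (HLB : (C1*M^2*eps^2/3) * (s^2*k) <= LB m).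
  { set (mR := INR m) in *. set (w := mR / k).
    assert (Hw : mR = w * k) by (unfold w; field; lra).
    assert (HmR2 : 2/3 * x <= mR) by lra.
    assert (Hw2 : 2/3 * (M*eps*s) <= w).
    { apply Rmult_le_reg_r with k; auto. rewrite <- Hw. unfold x in HmR2. lra. }
    assert (HB2 : 8*B^2 <= /3 * (C1*M*eps*s)) by lra.
    assert (Heta4 : 4*eta <= /2 * (C1*M*eps*s)).
    { unfold eta. assert (0 <= eps*s) by (apply Rmult_le_pos; lra). nra. }
    assert (Hbr : /2 * (C1*M*eps*s) <= 2*C1*w - 4*eta - 8*B^2) by nra.
    assert (HLB1 : LB m = 2*C1*w*(mR+1) - 4*mR*eta - 8*mR*B^2).
    { unfold LB. fold mR. rewrite Hw. field. lra. }
    assert (0 <= w) by nra.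
    assert (mR * (/2 * (C1*M*eps*s)) <= mR * (2*C1*w - 4*eta - 8*B^2)).
    { apply Rmult_le_compat_l; lra. }
    assert (2/3*x * (/2 * (C1*M*eps*s)) <= mR * (/2 * (C1*M*eps*s))).
    { apply Rmult_le_compat_r; [|lra]. assert (0 < C1*M*eps*s) by (repeat apply Rmult_lt_0_compat; lra). lra. }
    assert (2*C1*w*mR <= 2*C1*w*(mR+1)) by nra.
    unfold x in *. nra. }
  assert (Hb : forall n, 0 <= hit_within p N n a <= SS p a / SS p N).
  { intros n. apply hit_bound; auto. }
  pose proof (lim_bound _ _ Hb) as [L1 L2].
  unfold hit_before_zero. split; auto.
  eapply Rle_trans. exact L2. eapply Rle_trans. exact Hratio.
  assert (/ rr p m <= exp (- LB m)).
  { rewrite exp_Ropp. apply Rinv_le_contravar. apply exp_pos. apply Hr. unfold m; lia. }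
  eapply Rle_trans. exact H. apply exp_le_mono. lra.
Qed.

Lemma ceil_bounds x : 0 <= x -> x <= INR (Z.to_nat (Rceil_Z x)) <= x + 1.
Proof.
  intros hx. unfold Rceil_Z, Int_part.
  destruct (archimed (- x)) as [h1 h2].
  assert (Hz : (0 <= - (up (- x) - 1))%Z).
  { apply le_IZR. rewrite opp_IZR, minus_IZR. simpl. lra. }
  rewrite INR_IZR_INZ, Z2Nat.id by exact Hz.
  rewrite opp_IZR, minus_IZR. simpl. lra.
Qed.

Lemma ev_small (u : nat -> R) : is_lim_seq u 0 ->
  forall z w, 0 <= z -> 0 < w -> exists N, forall n, (N <= n)%nat -> Rabs (u n) * z < w.
Proof.
  intros Hu z w hz hw. apply is_lim_seq_spec in Hu.
  assert (he : 0 < w / (z + 1)) by (apply Rdiv_lt_0_compat; lra).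
  destruct (Hu (mkposreal _ he)) as [N HN]. exists N. intros n Hn.
  pose proof (HN n Hn). simpl in H. rewrite Rminus_0_r in H.
  assert (Rabs (u n) * (z + 1) < w).
  { apply Rmult_lt_reg_r with (/ (z+1)). apply Rinv_0_lt_compat; lra.
    rewrite Rmult_assoc, Rinv_r by lra. lra. }
  pose proof (Rabs_pos (u n)). nra.
Qed.

Theorem proposition4
  (eps alpha : R) (sigma : nat -> R) (C1 C2 M : R) (a : nat -> nat) :
  0 < eps -> 0 < alpha ->
  (forall K, 0 < sigma K) ->
  (* K^{-1/2+alpha} << sigma_K *)
  is_lim_seq (fun K => Rpower (INR K) (- / 2 + alpha) / sigma K) 0 ->
  (* sigma_K << 1 *)
  is_lim_seq sigma 0 ->
  0 < C1 -> 0 <= C2 ->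
  8 * C2 / C1 <= M ->
  (* a = a_K <= (1/3) M eps sigma_K K (for all large K) *)
  (exists K0 : nat, forall K : nat, (K0 <= K)%nat ->
      INR (a K) <= / 3 * M * eps * sigma K * INR K) ->
  is_lim_seq
    (fun K : nat =>
       exp (Rpower (INR K) (2 * alpha)) *
       hit_before_zero (up_prob C1 C2 eps sigma K)
         (Z.to_nat (Rceil_Z (M * eps * sigma K * INR K))) (a K))
    0.
Proof.
  intros heps halpha hsig hrho hsig0 hC1 hC2 hM [K0 HK0].
  assert (hM8 : 8 * C2 <= C1 * M).
  { apply Rmult_le_compat_r with (r := C1) in hM; [|lra].
    replace (8 * C2 / C1 * C1) with (8 * C2) in hM by (field; lra). lra. }
  assert (hM0 : 0 <= M) by nra.
  destruct hM0 as [hMpos | hM0].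
  2:{
    subst M. apply is_lim_seq_ext_loc with (fun _ => 0); [|apply is_lim_seq_const].
    exists K0. intros K HK. pose proof (HK0 K HK).
    assert (a K = O).
    { destruct (a K); auto. rewrite S_INR in H. pose proof (pos_INR n). lra. }
    rewrite H0. unfold hit_before_zero.
    rewrite (Lim_seq_ext _ (fun _ => 0)). rewrite Lim_seq_const. simpl. ring.
    intros n; destruct n; reflexivity. }
  set (c := C1*M^2*eps^2/3).
  assert (hc : 0 < c) by (unfold c; assert (0 < C1*M^2*eps^2) by (repeat apply Rmult_lt_0_compat; try nra); lra).
  apply is_lim_seq_spec. intros eps'.
  pose proof (cond_pos eps') as heps'.
  set (Y := 2 * Rabs (ln eps') / c + 1).
  assert (hY : 1 <= Y).
  { unfold Y. assert (0 <= 2 * Rabs (ln eps') / c) by (apply Rdiv_le_0_compat; [pose proof (Rabs_pos (ln eps')); lra | lra]). lra. }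
  set (delta := Rmin (Rmin (c/2) (/ (Y+1))) 1).
  assert (hd1 : delta <= c/2) by (unfold delta; eapply Rle_trans; [apply Rmin_l|apply Rmin_l]).
  assert (hd2 : delta <= / (Y+1)) by (unfold delta; eapply Rle_trans; [apply Rmin_l|apply Rmin_r]).
  assert (hd3 : delta <= 1) by (unfold delta; apply Rmin_r).
  assert (hd0 : 0 < delta).
  { unfold delta. repeat apply Rmin_pos; try lra. apply Rinv_0_lt_compat; lra. }
  set (A := C1*M*eps + C1 + C2*eps).
  assert (hCMe : 0 < C1*M*eps) by (repeat apply Rmult_lt_0_compat; lra).
  destruct (ev_small _ hrho 1 delta ltac:(lra) hd0) as [N1 HN1].
  destruct (ev_small _ hsig0 1 1 ltac:(lra) ltac:(lra)) as [N2 HN2].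
  destruct (ev_small _ hsig0 (8*C2*eps) 1 ltac:(nra) ltac:(lra)) as [N3 HN3].
  destruct (ev_small _ hsig0 (16*(C1*M*eps)) 1 ltac:(nra) ltac:(lra)) as [N4 HN4].
  destruct (ev_small _ hsig0 (16*C1) 1 ltac:(nra) ltac:(lra)) as [N5 HN5].
  destruct (ev_small _ hsig0 (24*A^2) (C1*M*eps) ltac:(nra) ltac:(lra)) as [N6 HN6].
  exists (Nat.max (Nat.max (Nat.max N1 N2) (Nat.max N3 N4)) (Nat.max (Nat.max N5 N6) (Nat.max K0 1))).
  intros K HK.
  specialize (HN1 K ltac:(lia)). specialize (HN2 K ltac:(lia)). specialize (HN3 K ltac:(lia)).
  specialize (HN4 K ltac:(lia)). specialize (HN5 K ltac:(lia)). specialize (HN6 K ltac:(lia)).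
  specialize (HK0 K ltac:(lia)).
  set (k := INR K) in *. set (s := sigma K) in *.
  assert (hk1 : 1 <= k) by (unfold k; replace 1 with (INR 1) by reflexivity; apply le_INR; lia).
  assert (hs : 0 < s) by apply hsig.
  rewrite Rabs_pos_eq in HN2, HN3, HN4, HN5, HN6 by lra.
  set (rho := Rpower k (- / 2 + alpha) / s) in *.
  assert (hrho0 : 0 < rho) by (apply Rdiv_lt_0_compat; [apply exp_pos | lra]).
  rewrite Rabs_pos_eq in HN1 by lra.
  set (T := s^2 * k).
  assert (hT0 : 0 < T) by (unfold T; nra).
  assert (Hid : Rpower k (2*alpha) = rho^2 * T).
  { unfold rho, T. replace (2*alpha) with ((-/2+alpha) + (-/2+alpha) + 1) by field.
    rewrite !Rpower_plus, Rpower_1 by lra. field. lra. }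
  assert (Hge1 : 1 <= Rpower k (2*alpha)).
  { replace 1 with (Rpower 1 (2*alpha)) at 1.
    apply Rle_Rpower_l; lra.
    unfold Rpower. rewrite ln_1, Rmult_0_r, exp_0. reflexivity. }
  assert (Hrho2 : rho^2 < delta) by nra.
  assert (HTY : Y + 1 < T).
  { assert (rho^2 * T < delta * T) by (apply Rmult_lt_compat_r; lra).
    assert (delta * T <= / (Y+1) * T) by (apply Rmult_le_compat_r; lra).
    assert (1 < /(Y+1) * T) by lra.
    apply Rmult_lt_reg_l with (/(Y+1)). apply Rinv_0_lt_compat; lra.
    rewrite Rinv_l by lra. lra. }
  assert (Hinvk : / k <= s^2).
  { apply Rmult_le_reg_r with k. lra. rewrite Rinv_l by lra. unfold T in HTY. lra. }
  assert (Hs1 : s <= 1) by lra.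
  assert (hN := ceil_bounds (M * eps * s * k) ltac:(repeat apply Rmult_le_pos; lra)).
  set (N := Z.to_nat (Rceil_Z (M * eps * s * k))) in *.
  assert (Hx1 : C1 * (M*eps*s*k + 1) / k = C1*M*eps*s + C1 * / k) by (field; lra).
  assert (HC1k : C1 * / k <= C1 * s) by (apply Rmult_le_compat_l; nra).
  assert (Hcore := core C1 C2 eps M k s (a K) N (up_prob C1 C2 eps sigma K)
    hC1 hC2 heps hMpos ltac:(lra) hs hM8 (proj1 hN) (proj2 hN)
    ltac:(replace (/3*(M*eps*s*k)) with (/ 3 * M * eps * s * k) by ring; exact HK0)
    ltac:(nra) ltac:(rewrite Hx1; nra)).
  assert (HB : (C1 * (M * eps * s * k + 1) / k + C2 * eps * s) ^ 2 <= C1 * M * eps * s / 24).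
  { rewrite Hx1. assert (0 <= C1 * M * eps * s + C1 * / k + C2 * eps * s).
    { assert (0 <= C1 * /k) by (apply Rmult_le_pos; [lra| left; apply Rinv_0_lt_compat; lra]).
      assert (0 <= C2*eps*s) by (repeat apply Rmult_le_pos; lra). nra. }
    assert (C1 * M * eps * s + C1 * / k + C2 * eps * s <= s * A).
    { unfold A. nra. }
    assert ((s*A)^2 <= C1 * M * eps * s / 24).
    { replace ((s*A)^2) with (s * (s * A^2)) by ring.
      assert (s * A^2 <= C1*M*eps/24) by nra.
      replace (C1 * M * eps * s / 24) with (s * (C1*M*eps/24)) by field.
      apply Rmult_le_compat_l; lra. }
    nra. }
  specialize (Hcore HB).
  assert (Hp : forall i, (1 <= i)%nat -> up_prob C1 C2 eps sigma K i = / 2 - (C1 * INR i / k - C2 * eps * s)).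
  { intros i Hi. destruct i. lia. unfold up_prob. fold k s. lra. }
  destruct (Hcore Hp) as [Hh1 Hh2].
  fold N. rewrite Rminus_0_r.
  rewrite Rabs_pos_eq by (apply Rmult_le_pos; [left; apply exp_pos | exact Hh1]).
  eapply Rle_lt_trans.
  { apply Rmult_le_compat_l. left; apply exp_pos. exact Hh2. }
  rewrite <- exp_plus. fold c. rewrite Hid. fold T.
  rewrite <- (exp_ln eps') by exact heps'.
  apply exp_increasing.
  assert (rho^2 * T <= c/2 * T) by (apply Rmult_le_compat_r; lra).
  assert (c/2 * Y = Rabs (ln eps') + c/2) by (unfold Y; field; lra).
  pose proof (Rle_abs (- ln eps')). rewrite Rabs_Ropp in H1.
  assert (c/2 * Y < c/2 * T) by (apply Rmult_lt_compat_l; lra).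
  lra.
Qed.
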